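(* Every congruence-splitting lattice has permutable congruences.
   Context: For a lattice $L$ and $x,y\in L$, $\Theta(x,y)$ denotes the least congruence of $L$ identifying $x$ and $y$; $\operatorname{Con}L$ is the lattice of congruences of $L$. A lattice $L$ is congruence-splitting if for all $u\leq v$ in $L$ and all $\alpha,\beta\in\operatorname{Con}L$ with $\Theta(u,v)=\alpha\vee\beta$, there exist $x,y$ in the interval $[u,v]$ with $x\vee y=v$, $u\equiv_\alpha x$ and $u\equiv_\beta y$. A lattice has permutable congruences if $\alpha\beta=\beta\alpha$ for all congruences $\alpha,\beta$, where $\alpha\beta=\{(x,y): \exists z,\ (x,z)\in\alpha,\ (z,y)\in\beta\}$. *)

(* Defs.v *)
From mathcomp Require Import all_boot all_order.
Set Implicit Arguments. Unset Strict Implicit. Unset Printing Implicit Defensive.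
Import Order.TTheory.
Local Open Scope order_scope.

Definition rel_incl (T : Type) (a b : T -> T -> Prop) := forall x y, a x y -> b x y.
Definition rel_eq (T : Type) (a b : T -> T -> Prop) := forall x y, a x y <-> b x y.

Definition is_congruence (d : Order.disp_t) (L : latticeType d) (R : L -> L -> Prop) :=
  [/\ forall x, R x x,
      forall x y, R x y -> R y x,
      forall x y z, R x y -> R y z -> R x z,
      forall x y x' y', R x y -> R x' y' -> R (x `&` x') (y `&` y')
    & forall x y x' y', R x y -> R x' y' -> R (x `|` x') (y `|` y')].

Definition Theta (d : Order.disp_t) (L : latticeType d) (x y : L) : L -> L -> Prop :=
  fun a b => forall R, is_congruence R -> R x y -> R a b.

Definition cjoin (d : Order.disp_t) (L : latticeType d) (al be : L -> L -> Prop) : L -> L -> Prop :=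
  fun a b => forall R, is_congruence R -> rel_incl al R -> rel_incl be R -> R a b.

Definition rcomp (T : Type) (al be : T -> T -> Prop) : T -> T -> Prop :=
  fun x y => exists z, al x z /\ be z y.

Definition congruence_splitting (d : Order.disp_t) (L : latticeType d) :=
  forall (u v : L), u <= v ->
  forall al be : L -> L -> Prop, is_congruence al -> is_congruence be ->
  rel_eq (Theta u v) (cjoin al be) ->
  exists x y : L, [/\ u <= x <= v, u <= y <= v, x `|` y = v, al u x & be u y].

Definition permutable_congruences (d : Order.disp_t) (L : latticeType d) :=
  forall al be : L -> L -> Prop, is_congruence al -> is_congruence be ->
  rel_eq (rcomp al be) (rcomp be al).

(* Main.v *)
Require Import Defs.
From mathcomp Require Import all_boot all_order.
Import Order.TTheory.
Local Open Scope order_scope.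

Section Aux.
Variables (d : Order.disp_t) (L : latticeType d).

Lemma cong_inter (a b : L -> L -> Prop) :
  is_congruence a -> is_congruence b -> is_congruence (fun x y => a x y /\ b x y).
Proof.
case=> a1 a2 a3 a4 a5 [b1 b2 b3 b4 b5]; split.
- by move=> x; split.
- by move=> x y [h1 h2]; split; auto.
- by move=> x y z [h1 h2] [h3 h4]; split; eauto.
- by move=> x y x' y' [h1 h2] [h3 h4]; split; auto.
- by move=> x y x' y' [h1 h2] [h3 h4]; split; auto.
Qed.

Lemma Theta_cong (u v : L) : is_congruence (Theta u v).
Proof.
split.
- by move=> x R [r1 *].
- by move=> x y h R hR huv; case: (hR) => _ r2 *; apply: r2; apply: h.
- by move=> x y z h1 h2 R hR huv; case: (hR) => _ _ r3 *; apply: (r3 _ y); [apply: h1|apply: h2].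
- by move=> x y x' y' h1 h2 R hR huv; case: (hR) => _ _ _ r4 _; apply: r4; [apply: h1|apply: h2].
- by move=> x y x' y' h1 h2 R hR huv; case: (hR) => _ _ _ _ r5; apply: r5; [apply: h1|apply: h2].
Qed.

Lemma congI (R : L -> L -> Prop) x y z : is_congruence R -> R x y -> R (x `&` z) (y `&` z).
Proof. by case=> r1 _ _ r4 _ h; apply: r4. Qed.
Lemma congU (R : L -> L -> Prop) x y z : is_congruence R -> R x y -> R (x `|` z) (y `|` z).
Proof. by case=> r1 _ _ _ r5 h; apply: r5. Qed.
Lemma congIl (R : L -> L -> Prop) x y z : is_congruence R -> R x y -> R (z `&` x) (z `&` y).
Proof. by case=> r1 _ _ r4 _ h; apply: r4. Qed.
Lemma congUl (R : L -> L -> Prop) x y z : is_congruence R -> R x y -> R (z `|` x) (z `|` y).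
Proof. by case=> r1 _ _ _ r5 h; apply: r5. Qed.
Lemma congS (R : L -> L -> Prop) x y : is_congruence R -> R x y -> R y x.
Proof. by case=> _ r2 *; apply: r2. Qed.
Lemma congT (R : L -> L -> Prop) x y z : is_congruence R -> R x y -> R y z -> R x z.
Proof. by case=> _ _ r3 *; apply: (r3 _ y). Qed.

Lemma chain_lemma : congruence_splitting L ->
  forall al be : L -> L -> Prop, is_congruence al -> is_congruence be ->
  forall u w v : L, u <= w -> w <= v -> al u w -> be w v ->
  exists y, [/\ u <= y, y <= v, be u y & al y v].
Proof.
move=> hs al be ha hb u w v huw hwv hal hbe.
have huv : u <= v by apply: le_trans hwv.
pose a' := fun x y => al x y /\ Theta u v x y.
pose b' := fun x y => be x y /\ Theta u v x y.
have hT := Theta_cong u v.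
have ha' : is_congruence a' by apply: cong_inter.
have hb' : is_congruence b' by apply: cong_inter.
have Tuw : Theta u v u w.
  move=> R hR h; have := congI _ _ _ w hR h.
  rewrite (meet_l huw) (meet_r hwv) => hh. exact: hh.
have Twv : Theta u v w v.
  move=> R hR h; have := congU _ _ _ w hR h.
  by rewrite (join_r huw) (join_l hwv).
have heq : rel_eq (Theta u v) (cjoin a' b').
  move=> x y; split.
  - move=> h R hR i1 i2; apply: h => //.
    apply: (congT _ _ w _ hR); [apply: i1|apply: i2]; by split.
  - move=> h; apply: h => //.
    + by move=> p q [].
    + by move=> p q [].
have [x [y [_ /andP[hy1 hy2] hxy [hx _] [hy _]]]] := hs u v huv a' b' ha' hb' heq.
exists y; split => //.
move: hy2=> _.
have := congU _ _ _ y ha hx; rewrite hxy (join_r hy1) => h.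
exact: h.
Qed.

End Aux.
Arguments congI {d L}. Arguments congU {d L}. Arguments congIl {d L}. Arguments congUl {d L}. Arguments congS {d L}. Arguments congT {d L}.

Lemma main_in (d : Order.disp_t) (L : latticeType d) :
  congruence_splitting L ->
  forall al be : L -> L -> Prop, is_congruence al -> is_congruence be ->
  forall a b c : L, a `&` b <= c -> c <= a `|` b -> al a c -> be c b ->
  exists e, be a e /\ al e b.
Proof.
move=> hs al be ha hb a b c hmc hcj hac hcb.
have [a1 a2 a3 a4 a5] := ha; have [b1 b2 b3 b4 b5] := hb.
have [y2 [y2a y2j h1 h2]] : exists y, [/\ a <= y, y <= a `|` b, be a y & al y (a `|` b)].
  apply: (@chain_lemma d L hs al be ha hb a (a `|` c) (a `|` b)).
  - exact: leUl.
  - by rewrite leUx leUl.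
  - by have := congUl _ _ _ a ha hac; rewrite joinxx.
  - exact: congUl.
have [z1 [z1m z1b h3 h4]] : exists y, [/\ a `&` b <= y, y <= b, be (a `&` b) y & al y b].
  apply: (@chain_lemma d L hs al be ha hb (a `&` b) (b `&` c) b).
  - by rewrite lexI leIr.
  - exact: leIl.
  - by have := congIl _ _ _ b ha hac; rewrite meetC.
  - by have := congIl _ _ _ b hb hcb; rewrite meetxx.
have [z2 [z2b z2j h5 h6]] : exists y, [/\ b <= y, y <= a `|` b, al b y & be y (a `|` b)].
  apply: (@chain_lemma d L hs be al hb ha b (b `|` c) (a `|` b)).
  - exact: leUl.
  - by rewrite leUx leUr.
  - by have := congUl _ _ _ b hb (b2 _ _ hcb); rewrite joinxx.
  - by have := congUl _ _ _ b ha (a2 _ _ hac); rewrite [b `|` a]joinC.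
exists ((y2 `|` z1) `&` z2); split.
- have := b5 _ _ _ _ h1 h3; rewrite (join_l (leIl _ _)) => e1.
  have := b4 _ _ _ _ e1 (b2 _ _ h6); rewrite (meet_l (leUl _ _)) //.
- have := a5 _ _ _ _ h2 h4; rewrite (join_l (leUr _ _)) => e1.
  have := a4 _ _ _ _ e1 (a1 z2).
  rewrite (meet_r z2j) => e2.
  exact: a3 _ _ _ e2 (a2 _ _ h5).
Qed.

Theorem theorem1p2 (d : Order.disp_t) (L : latticeType d) :
  congruence_splitting L -> permutable_congruences L.
Proof.
move=> hs.
suff H : forall al be : L -> L -> Prop, is_congruence al -> is_congruence be ->
  forall a b, rcomp al be a b -> rcomp be al a b.
  by move=> al be ha hb x y; split; apply: H.
move=> al be ha hb a b [c [hac hcb]].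
have [a1 a2 a3 a4 a5] := ha; have [b1 b2 b3 b4 b5] := hb.
pose c' := (c `|` (a `&` b)) `&` (a `|` b).
have hac' : al a c'.
  have := a4 _ _ _ _ (congU _ _ _ (a `&` b) ha hac) (a1 (a `|` b)).
  by rewrite (join_l (leIl _ _)) (meet_l (leUl _ _)).
have hcb' : be c' b.
  have := b4 _ _ _ _ (congU _ _ _ (a `&` b) hb hcb) (b1 (a `|` b)).
  by rewrite (join_l (leIr _ _)) (meet_l (leUr _ _)).
have hm : a `&` b <= c' by rewrite lexI leUr (le_trans (leIl _ _) (leUl _ _)).
have hj : c' <= a `|` b by exact: leIr.
have [e [e1 e2]] := @main_in d L hs al be ha hb a b c' hm hj hac' hcb'.
by exists e.
Qed.
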